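(* Let $X,Y\subset\mathbb{Z}^d$ be nonempty finite sets. Then there exists $\tau\in\mathbb{Z}^d$ such that there is exactly one pair $(x,y)$ with $x\in X$, $y\in Y+\tau$ and $|x-y|=1$.
   Context: $|\cdot|$ is the Euclidean norm; $Y+\tau=\{y+\tau:y\in Y\}$. *)

(* Defs.v *)
From HB Require Import structures.
From mathcomp Require Import all_boot all_order all_algebra.
From mathcomp Require Import finmap.
Set Implicit Arguments. Unset Strict Implicit. Unset Printing Implicit Defensive.
Import Order.TTheory GRing.Theory Num.Theory.
Local Open Scope ring_scope.
Local Open Scope fset_scope.

Definition sqnorm (d : nat) (v : 'rV[int]_d) : int :=
  \sum_(i < d) (v ord0 i) ^+ 2.

(* |x - y| = 1  <->  |x - y|^2 = 1 (the norm is the nonnegative root). *)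
Definition unit_dist (d : nat) (x y : 'rV[int]_d) : Prop :=
  sqnorm (x - y) = 1.

Definition translate (d : nat) (Y : {fset 'rV[int]_d}) (tau : 'rV[int]_d)
  : {fset 'rV[int]_d} := [fset (y + tau)%R | y in Y].

(* Main.v *)
Require Import Defs.
From mathcomp Require Import all_boot all_order all_algebra.
From mathcomp Require Import finmap.
Import GRing.Theory.
Import Order.TTheory Num.Theory.
Local Open Scope ring_scope.
Local Open Scope fset_scope.
Set Implicit Arguments.

Definition lpos {d} (v : 'rV[int]_d) := exists i : 'I_d,
  0 < v ord0 i /\ forall j : 'I_d, (j < i)%N -> v ord0 j = 0.
Definition lnn {d} (v : 'rV[int]_d) := v = 0 \/ lpos v.

Lemma lnnD d (a b : 'rV[int]_d) : lnn a -> lnn b -> lnn (a + b).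
Proof.
case=> [->|[i [ai Ha]]]; first by rewrite add0r.
case=> [->|[j [bj Hb]]]; first by rewrite addr0; right; exists i.
right; case: (ltngtP i j) => hij.
- exists i; split; first by rewrite mxE (Hb i hij) addr0.
  by move=> k hk; rewrite mxE Ha // Hb ?addr0 //; exact: ltn_trans hk hij.
- exists j; split; first by rewrite mxE (Ha j hij) add0r.
  by move=> k hk; rewrite mxE Ha ?Hb ?addr0 //; exact: ltn_trans hk hij.
- have eij : j = i by apply/val_inj.
  subst j; exists i; split; first by rewrite mxE addr_gt0.
  by move=> k hk; rewrite mxE Ha ?Hb ?addr0.
Qed.

Lemma lnn_anti d (a : 'rV[int]_d) : lnn a -> lnn (- a) -> a = 0.
Proof.
case=> [//|[i [ai Ha]]].
case=> [h|[j [bj Hb]]]; first by move/eqP: h; rewrite oppr_eq0 => /eqP.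
exfalso; move: bj; rewrite mxE; case: (ltngtP i j) => hij.
- by have := Hb i hij; rewrite mxE => /eqP; rewrite oppr_eq0 => /eqP h; rewrite h ltxx in ai.
- by rewrite Ha // oppr0 ltxx.
- have eij : j = i by apply/val_inj.
  subst j; rewrite oppr_gt0 => h; have := lt_trans ai h; by rewrite ltxx.
Qed.

Lemma lnn_total d (a : 'rV[int]_d) : lnn a \/ lnn (- a).
Proof.
have [->|na] := eqVneq a 0; first by left; left.
have ex : exists n, [exists i : 'I_d, (val i == n) && (a ord0 i != 0)].
  case: (boolP [exists i : 'I_d, a ord0 i != 0]).
    by move=> /existsP [i hi]; exists (val i); apply/existsP; exists i; rewrite eqxx.
  move=> /existsPn h; exfalso; move/eqP: na; apply; apply/matrixP => r c.
  by rewrite ord1 mxE; have := h c; rewrite negbK => /eqP.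
case: (ex_minnP ex) => m /existsP [i /andP [/eqP him ai]] hmin.
have H0 : forall j : 'I_d, (j < i)%N -> a ord0 j = 0.
  move=> j hj; apply/eqP; apply: contraTT hj => hj.
  rewrite -leqNgt him; apply: hmin; apply/existsP; exists j; by rewrite eqxx.
have [hp|hn] := ltP 0 (a ord0 i).
  by left; right; exists i.
right; right; exists i; split.
  by rewrite mxE oppr_gt0 lt_neqAle ai hn.
by move=> j hj; rewrite mxE H0 // oppr0.
Qed.

Lemma seq_max (T : eqType) (r : T -> T -> Prop) (s : seq T) :
  s != [::] -> (forall a b, r a b \/ r b a) ->
  (forall a b c, r a b -> r b c -> r a c) ->
  exists2 x, x \in s & forall y, y \in s -> r y x.
Proof.
move=> + tot tr; elim: s => // a s IH _.
case: s IH => [_|b s IH].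
  exists a; first by rewrite mem_head.
  by move=> y; rewrite inE => /eqP ->; case: (tot a a).
have [x xin Hx] := IH isT.
case: (tot a x) => h.
  exists x; first by rewrite inE xin orbT.
  by move=> y; rewrite inE => /orP [/eqP ->|/Hx].
exists a; first by rewrite mem_head.
by move=> y; rewrite inE => /orP [/eqP ->|/Hx hy]; [case: (tot a a)|exact: tr hy h].
Qed.

From mathcomp Require Import ring lra.

Lemma sqnormN d (v : 'rV[int]_d) : sqnorm (- v) = sqnorm v.
Proof. by rewrite /sqnorm; apply: eq_bigr => i _; rewrite mxE sqrrN. Qed.

Definition e0 d (hd : (0 < d)%N) : 'rV[int]_d := \row_j ((j == Ordinal hd)%:R).

Lemma sqnorm_e0 d hd : sqnorm (@e0 d hd) = 1.
Proof.
rewrite /sqnorm (bigD1 (Ordinal hd)) //= mxE eqxx big1 ?addr0 ?expr1n //.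
by move=> j /negbTE hj; rewrite mxE hj expr0n.
Qed.

Lemma key d hd (w : 'rV[int]_d) : lnn w -> sqnorm (w + @e0 d hd) = 1 -> w = 0.
Proof.
move=> hw; set i0 := Ordinal hd.
have hw0 : 0 <= w ord0 i0.
  case: hw => [->|[i [wi Hi]]]; first by rewrite mxE.
  case: (ltnP 0 i) => h; first by rewrite Hi.
  have -> : i0 = i by apply/val_inj => /=; move: h; rewrite leqn0 => /eqP.
  exact: ltW.
rewrite /sqnorm (bigD1 i0) //= !mxE eqxx.
rewrite (eq_bigr (fun j => (w ord0 j) ^+ 2)); last first.
  by move=> j /negbTE hj; rewrite !mxE hj addr0.
set S := \sum_(_ | _) _ => hS.
have S0 : 0 <= S by apply: sumr_ge0 => j _; exact: sqr_ge0.
have e1 : (true%:R : int) = 1 by []. rewrite e1 sqrrD1 in hS.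
have := mulr_ge0 hw0 hw0 => hsq.
have hw00 : w ord0 i0 = 0 by nra.
have S00 : S = 0 by nra.
apply/matrixP => r c; rewrite ord1 mxE.
have [->//|hc] := eqVneq c i0.
move/eqP: S00; rewrite psumr_eq0; last by move=> j _; exact: sqr_ge0.
move=> /allP /(_ c (mem_index_enum c)); rewrite hc /= sqrf_eq0 => /eqP //.
Qed.

Lemma fset_seq_ne {T : choiceType} (X : {fset T}) : X != fset0 -> (X : seq T) != [::].
Proof.
move=> /fset0Pn [x hx]; apply/negP => /eqP h.
by move: hx; rewrite -[x \in X]/(x \in (X : seq T)) h.
Qed.

Theorem lemma3p4 (d : nat) (hd : (0 < d)%N) (X Y : {fset 'rV[int]_d})
  (hX : X != fset0) (hY : Y != fset0) :
  exists tau : 'rV[int]_d,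
    exists p : 'rV[int]_d * 'rV[int]_d,
      [/\ p.1 \in X, p.2 \in translate Y tau, unit_dist p.1 p.2 &
        forall x y : 'rV[int]_d,
          x \in X -> y \in translate Y tau -> unit_dist x y -> (x, y) = p].
Proof.
have tot1 : forall a b : 'rV[int]_d, lnn (b - a) \/ lnn (a - b).
  by move=> a b; case: (lnn_total (b - a)); [left|rewrite opprB; right].
have tr1 : forall a b c : 'rV[int]_d, lnn (b - a) -> lnn (c - b) -> lnn (c - a).
  move=> a b c h1 h2; have -> : (c - a = (c - b) + (b - a))%R by rewrite addrA subrK.
  exact: lnnD.
have [x xX Hx] := @seq_max _ (fun a b : 'rV[int]_d => lnn (b - a)) _ (@fset_seq_ne _ X hX) tot1 tr1.
have [y yY Hy] := @seq_max _ (fun a b : 'rV[int]_d => lnn (a - b)) _ (@fset_seq_ne _ Y hY)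
  (fun a b => tot1 b a) (fun a b c h1 h2 => tr1 c b a h2 h1).
exists (x + @e0 _ hd - y)%R, (x, x + @e0 _ hd)%R; split => //=.
- apply/imfsetP; exists y => //; apply/matrixP => i j; rewrite !mxE; ring.
- by rewrite /unit_dist opprD addrA subrr add0r sqnormN sqnorm_e0.
move=> x' y'' x'X /imfsetP [y' y'Y ->] hu.
have ha : lnn (y' - y) := Hy y' y'Y.
have hb : lnn (x - x') := Hx x' x'X.
have hw := @key _ hd _ (lnnD ha hb).
have e : (x' - (y' + (x + @e0 _ hd - y)) = - ((y' - y) + (x - x') + @e0 _ hd))%R.
  by apply/matrixP => i j; rewrite !mxE; ring.
move: hu; rewrite /unit_dist e sqnormN => /hw hab.
have hba : (x - x' = - (y' - y))%R by apply/eqP; rewrite -addr_eq0 addrC hab.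
have ha0 : (y' - y = 0)%R by apply: lnn_anti => //; rewrite -hba.
move: hba; rewrite ha0 oppr0 => /subr0_eq <-.
by move/subr0_eq: ha0 => ->; rewrite addrC subrK.
Qed.
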